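(* For a $d$-dimensional state ensemble $\Omega=\{(p_j,\rho_j)\}_{j=0}^{k-1}$, the optimal discrimination probability $P_{\mathrm{suc}}(\Omega)=\max_{\text{POVMs }\{E_j\}}\sum_j p_j\mathrm{tr}(E_j\rho_j)$ can be achieved by quantum state discrimination via incoherent operations; i.e. $P_{\mathrm{suc}}(\Omega)=\widetilde{P}_{\mathrm{suc,IO}}(\Omega)=\widetilde{P}_{\mathrm{suc,MIO}}(\Omega)$.
   Context: Quantum state discrimination via free operations: for a set of free operations $\mathcal{O}$, $\widetilde{P}_{\mathrm{suc},\mathcal{O}}(\Omega)=\sup\sum_j p_j\mathrm{tr}[\mathcal{N}_{A\to BA'}(\rho_j)(|j\rangle\langle j|_B\otimes I_{A'})]$ over channels $\mathcal{N}_{A\to BA'}\in\mathcal{O}$, with $\dim B=k$, $A'\cong A$, and $\{|j\rangle\}$ the computational basis (i.e. apply $\mathcal{N}$ then measure $B$ in the computational basis). Incoherent states are diagonal in the computational basis. IO (incoherent operations) are channels with a Kraus decomposition $\{K_n\}$ such that each $K_n\rho K_n^\dagger$ is incoherent (up to normalization) for every incoherent $\rho$; MIO are channels mapping incoherent states to incoherent states; IO $\subsetneq$ MIO. *)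

(* Defs.v *)
From HB Require Import structures.
From mathcomp Require Import all_boot all_order all_algebra.
From mathcomp Require Import classical_sets reals.
From mathcomp.real_closed Require Import complex.
Set Implicit Arguments. Unset Strict Implicit. Unset Printing Implicit Defensive.
Import Order.TTheory GRing.Theory Num.Theory.
Local Open Scope ring_scope.
Local Open Scope classical_set_scope.

Section QSD.
Variable R : realType.
Local Notation C := (R[i]).

Definition adjmx m n (A : 'M[C]_(m, n)) : 'M[C]_(n, m) := map_mx Num.conj (A^T).

Definition psd n (A : 'M[C]_n) : Prop :=
  adjmx A = A /\ forall v : 'cV[C]_n, 0 <= (adjmx v *m A *m v) 0 0.

Definition density n (rho : 'M[C]_n) : Prop := psd rho /\ \tr rho = 1.

Definition incoherent n (rho : 'M[C]_n) : Prop := density rho /\ is_diag_mx rho.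

Definition povm d k (E : 'I_k -> 'M[C]_d) : Prop :=
  (forall j, psd (E j)) /\ \sum_(j < k) E j = 1%:M.

Definition kraus_tp m n (K : seq 'M[C]_(m, n)) : Prop :=
  \sum_(M <- K) adjmx M *m M = 1%:M.

Definition kraus_apply m n (K : seq 'M[C]_(m, n)) (rho : 'M[C]_n) : 'M[C]_m :=
  \sum_(M <- K) M *m rho *m adjmx M.

Definition channel m n (N : 'M[C]_n -> 'M[C]_m) : Prop :=
  exists K : seq 'M[C]_(m, n), kraus_tp K /\ forall rho, N rho = kraus_apply K rho.

Definition IO m n (N : 'M[C]_n -> 'M[C]_m) : Prop :=
  exists K : seq 'M[C]_(m, n), kraus_tp K /\ (forall rho, N rho = kraus_apply K rho) /\
    forall M, M \in K -> forall rho, incoherent rho -> is_diag_mx (M *m rho *m adjmx M).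

Definition MIO m n (N : 'M[C]_n -> 'M[C]_m) : Prop :=
  channel N /\ forall rho, incoherent rho -> incoherent (N rho).

(* |j><j|_B (x) I_{A'} on B (x) A' with dim B = k, dim A' = d; the product
   basis |j>|a> is indexed by mxvec_index j a *)
Definition projB k d (j : 'I_k) : 'M[C]_(k * d) :=
  \sum_(a < d) delta_mx (mxvec_index j a) (mxvec_index j a).

Definition Psuc d k (p : 'I_k -> R) (rho : 'I_k -> 'M[C]_d) : R :=
  sup [set x | exists E, povm E /\
         x = \sum_(j < k) p j * @complex.Re R (\tr (E j *m rho j))].

(* success probability via free operations O: apply N : A -> B A', then
   measure B in the computational basis *)
Definition Psuc_free d k (O : ('M[C]_d -> 'M[C]_(k * d)) -> Prop)
  (p : 'I_k -> R) (rho : 'I_k -> 'M[C]_d) : R :=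
  sup [set x | exists N, O N /\
         x = \sum_(j < k) p j * @complex.Re R (\tr (N (rho j) *m projB d j))].

End QSD.

(* Main.v *)
Require Import Defs.
From HB Require Import structures.
From mathcomp Require Import all_boot all_order all_algebra.
From mathcomp Require Import classical_sets reals.
From mathcomp.real_closed Require Import complex.
From mathcomp Require Import spectral sesquilinear.
Import Order.TTheory GRing.Theory Num.Theory.
Local Open Scope ring_scope.
Set Implicit Arguments. Unset Strict Implicit. Unset Printing Implicit Defensive.

Section Aux.
Variable R : realType.
Local Notation C := (R[i]).

Lemma adjmxE m n (A : 'M[C]_(m, n)) i j : adjmx A i j = Num.conj (A j i).
Proof. by rewrite /adjmx !mxE. Qed.

Lemma adjmxK m n (A : 'M[C]_(m, n)) : adjmx (adjmx A) = A.
Proof. by apply/matrixP => i j; rewrite !adjmxE conjCK. Qed.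

Lemma adjmxM m n p (A : 'M[C]_(m, n)) (B : 'M[C]_(n, p)) :
  adjmx (A *m B) = adjmx B *m adjmx A.
Proof.
apply/matrixP => i j; rewrite !mxE rmorph_sum; apply: eq_bigr => l _.
by rewrite !adjmxE rmorphM mulrC.
Qed.

Lemma adjmxD m n (A B : 'M[C]_(m, n)) : adjmx (A + B) = adjmx A + adjmx B.
Proof. by apply/matrixP => i j; rewrite !mxE rmorphD. Qed.

Lemma adjmx0 m n : adjmx (0 : 'M[C]_(m, n)) = 0.
Proof. by apply/matrixP => i j; rewrite !mxE rmorph0. Qed.

Lemma adjmx_sum m n (I : Type) (s : seq I) (F : I -> 'M[C]_(m, n)) :
  adjmx (\sum_(i <- s) F i) = \sum_(i <- s) adjmx (F i).
Proof. exact: (big_morph _ (@adjmxD m n) (@adjmx0 m n)). Qed.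

Lemma adjmx_delta m n (i : 'I_m) (j : 'I_n) :
  adjmx (delta_mx i j : 'M[C]_(m, n)) = delta_mx j i.
Proof. by apply/matrixP => a b; rewrite adjmxE !mxE rmorph_nat andbC. Qed.

Lemma tr_sum n (I : Type) (s : seq I) (F : I -> 'M[C]_n) :
  \tr (\sum_(i <- s) F i) = \sum_(i <- s) \tr (F i).
Proof. exact: (big_morph _ (@mxtraceD _ n) (@mxtrace0 _ n)). Qed.

Lemma form_ge0 m (w : 'cV[C]_m) : 0 <= (adjmx w *m w) 0 0.
Proof.
rewrite !mxE; apply: sumr_ge0 => i _; rewrite adjmxE mulrC.
exact: mul_conjC_ge0.
Qed.

Lemma psd_congr m n (A : 'M[C]_m) (M : 'M[C]_(m, n)) :
  psd A -> psd (adjmx M *m A *m M).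
Proof.
move=> [hA qA]; split; first by rewrite !adjmxM adjmxK hA mulmxA.
move=> v; have := qA (M *m v).
by rewrite adjmxM !mulmxA.
Qed.

Lemma psd0 n : psd (0 : 'M[C]_n).
Proof.
split; first exact: adjmx0.
by move=> v; rewrite mulmx0 mul0mx mxE.
Qed.

Lemma psdD n (A B : 'M[C]_n) : psd A -> psd B -> psd (A + B).
Proof.
move=> [hA qA] [hB qB]; split; first by rewrite adjmxD hA hB.
by move=> v; rewrite mulmxDr mulmxDl mxE addr_ge0.
Qed.

Lemma psd_sum n (I : Type) (s : seq I) (F : I -> 'M[C]_n) :
  (forall i, psd (F i)) -> psd (\sum_(i <- s) F i).
Proof.
move=> h; elim: s => [|a s IH]; first by rewrite big_nil; exact: psd0.
by rewrite big_cons; apply: psdD.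
Qed.

Lemma psd_adjM m n (B : 'M[C]_(m, n)) : psd (adjmx B *m B).
Proof.
split; first by rewrite adjmxM adjmxK.
move=> v; have := form_ge0 (B *m v).
by rewrite adjmxM !mulmxA.
Qed.

Lemma psd_delta n (x : 'I_n) : psd (delta_mx x x : 'M[C]_n).
Proof.
have -> : (delta_mx x x : 'M[C]_n) = adjmx (delta_mx 0 x : 'rV[C]_n) *m delta_mx 0 x.
  by rewrite adjmx_delta mul_delta_mx.
exact: psd_adjM.
Qed.


Lemma sum_delta n : \sum_(a < n) (delta_mx a a : 'M[C]_n) = 1%:M.
Proof.
apply/matrixP => y z; rewrite summxE !mxE.
rewrite (bigD1 y) //= mxE eqxx /= big1 ?addr0.
  by rewrite eq_sym.
by move=> i /negbTE ne; rewrite mxE eq_sym ne.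
Qed.

Lemma mxvec_index_inj m n (i i' : 'I_m) (j j' : 'I_n) :
  (mxvec_index i j == mxvec_index i' j') = (i == i') && (j == j').
Proof.
rewrite /mxvec_index; apply/eqP/andP => [h|[/eqP-> /eqP->]] //.
have /enum_rank_inj [-> ->] := cast_ord_inj h; by [].
Qed.

Lemma sum_projB k d : \sum_(j < k) projB R d j = 1%:M :> 'M[C]_(k * d).
Proof.
rewrite /projB pair_bigA /= -sum_delta (reindex (uncurry (@mxvec_index k d))) /=.
  by apply: eq_bigr => -[i j] _.
apply: onW_bij; exact: (onT_bij (curry_mxvec_bij k d)).
Qed.

Lemma delta_sand m n p q (r : 'I_m) (a : 'I_n) (b : 'I_p) (c : 'I_q)
  (Y : 'M[C]_(n, p)) s t :
  (delta_mx r a *m Y *m delta_mx b c) s t = ((s == r) && (t == c))%:R * Y a b.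
Proof.
rewrite mxE (bigD1 b) //= big1 ?addr0; last first.
  by move=> i ne; rewrite [X in _ * X]mxE (negbTE ne) mulr0.
rewrite [X in _ * X]mxE eqxx /= mxE (bigD1 a) //= big1 ?addr0; last first.
  by move=> i ne; rewrite [X in X * _]mxE (negbTE ne) andbF mul0r.
rewrite [delta_mx r a s a]mxE eqxx andbT.
by case: (s == r); case: (t == c); rewrite /= ?mul1r ?mulr1 ?mul0r ?mulr0.
Qed.

Lemma adjmx_diag n (s : 'rV[C]_n) : adjmx (diag_mx s) = diag_mx (map_mx Num.conj s).
Proof.
apply/matrixP => i j; rewrite adjmxE !mxE rmorphMn.
have [->|ne] := eqVneq i j; first by [].
have ne2 : (j == i) = false by rewrite eq_sym (negbTE ne).
by rewrite ?ne2 ?(negbTE ne) !mulr0n ?rmorph0.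
Qed.

Definition sqrtmx n (A : 'M[C]_n) : 'M[C]_n :=
  diag_mx (map_mx sqrtC (spectral_diag A)) *m spectralmx A.

Lemma psd_sqrt n (A : 'M[C]_n) : psd A -> A = adjmx (sqrtmx A) *m sqrtmx A.
Proof.
move=> [hA qA].
have normal : A \is normalmx.
  apply/normalmxP; have hA' : map_mx Num.conj (A^T) = A := hA.
  by rewrite hA'.
have /orthomx_spectralP eA := normal.
have uP : spectralmx A *m adjmx (spectralmx A) = 1%:M :=
  unitarymxP (spectral_unitarymx A).
have iP : invmx (spectralmx A) = adjmx (spectralmx A) :=
  invmx_unitary (spectral_unitarymx A).
rewrite iP in eA.
set P := spectralmx A in uP eA *; set D := spectral_diag A in eA *.
have D_ge0 : forall i, 0 <= D 0 i.
  move=> i; have := qA (adjmx P *m delta_mx i 0).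
  rewrite adjmxM adjmx_delta adjmxK {1}eA.
  have -> : (delta_mx 0 i : 'rV[C]_n) *m P *m (adjmx P *m diag_mx D *m P) *m (adjmx P *m (delta_mx i 0 : 'cV[C]_n))
     = (delta_mx 0 i : 'rV[C]_n) *m (P *m adjmx P) *m diag_mx D *m (P *m adjmx P) *m (delta_mx i 0 : 'cV[C]_n).
    by rewrite !mulmxA.
  by rewrite uP !mulmx1 delta_sand eqxx mul1r mxE eqxx mulr1n.
rewrite /sqrtmx adjmxM adjmx_diag !mulmxA -[adjmx _ *m diag_mx _ *m diag_mx _]mulmxA mulmx_diag.
rewrite {1}eA; congr (_ *m _ *m _); congr diag_mx; apply/rowP => j.
by rewrite !mxE conj_Creal ?sqrtC_real // -expr2 sqrtCK.
Qed.

Lemma psd_projB k d (j : 'I_k) : psd (projB R d j).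
Proof. rewrite /projB; apply: psd_sum => a; exact: psd_delta. Qed.

Lemma IO_MIO m n (N : 'M[C]_n -> 'M[C]_m) : IO N -> MIO N.
Proof.
move=> [K [tpK [eN diagK]]]; split; first by exists K.
move=> rho [[psdr trr] drho]; rewrite eN; split; first split.
- rewrite /kraus_apply; apply: psd_sum => M.
  by have := psd_congr (adjmx M) psdr; rewrite adjmxK.
- rewrite /kraus_apply tr_sum.
  under eq_bigr => M _ do rewrite mxtrace_mulC mulmxA.
  by rewrite -tr_sum -mulmx_suml tpK mul1mx.
- apply/is_diag_mxP => i j ne; rewrite /kraus_apply summxE big_seq big1 // => M MK.
  exact: (is_diag_mxP (diagK M MK rho (conj (conj psdr trr) drho)) i j ne).
Qed.

Lemma tr_sand m n (M : 'M[C]_(m, n)) (rho : 'M[C]_n) (P : 'M[C]_m) :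
  \tr (M *m rho *m adjmx M *m P) = \tr ((adjmx M *m P *m M) *m rho).
Proof.
transitivity (\tr ((rho *m adjmx M *m P) *m M)).
  by rewrite [RHS]mxtrace_mulC !mulmxA.
by rewrite [RHS]mxtrace_mulC !mulmxA.
Qed.

Lemma MIO_povm k d (N : 'M[C]_d -> 'M[C]_(k * d)) : MIO N ->
  exists E : 'I_k -> 'M[C]_d, povm E /\
    forall rho j, \tr (N rho *m projB R d j) = \tr (E j *m rho).
Proof.
move=> [[K [tpK eN]] _].
exists (fun j => \sum_(M <- K) adjmx M *m projB R d j *m M); split; first split.
- move=> j; apply: psd_sum => M; apply: psd_congr; exact: psd_projB.
- rewrite exchange_big /=.
  under eq_bigr => M _ do rewrite -mulmx_suml -mulmx_sumr sum_projB mulmx1.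
  exact: tpK.
- move=> rho j; rewrite eN /kraus_apply !mulmx_suml !tr_sum.
  by apply: eq_bigr => M _; rewrite tr_sand.
Qed.

Lemma projB_sand k d (j j' : 'I_k) (a : 'I_d) :
  delta_mx a (mxvec_index j' a) *m projB R d j *m delta_mx (mxvec_index j' a) a
  = (delta_mx a a : 'M[C]_d) *+ (j' == j).
Proof.
apply/matrixP => s t; rewrite /projB mulmx_sumr mulmx_suml summxE.
under eq_bigr => b _ do rewrite delta_sand mxE mxvec_index_inj andbb.
rewrite -mulr_sumr mulmxnE mxE.
case: (j' == j) => /=; last first.
  by rewrite big1 ?mulr0 ?mulr0n.
rewrite (bigD1 a) //= big1 ?addr0 ?eqxx ?mulr1 //.
by move=> b /negbTE nb; rewrite eq_sym nb.
Qed.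

Lemma povm_IO k d (E : 'I_k -> 'M[C]_d) : povm E ->
  exists N : 'M[C]_d -> 'M[C]_(k * d), IO N /\
    forall rho j, \tr (N rho *m projB R d j) = \tr (E j *m rho).
Proof.
move=> [psdE sumE].
have [B EB] : exists B : 'I_k -> 'M[C]_d, forall j, E j = adjmx (B j) *m B j.
  by exists (fun j => sqrtmx (E j)) => j; apply: psd_sqrt.
pose K := [seq delta_mx (mxvec_index j a) a *m B j
           | j <- index_enum 'I_k, a <- index_enum 'I_d] : seq 'M[C]_(k * d, d).
exists (kraus_apply K); split; first (exists K; split; [|split => //]).
- rewrite /kraus_tp big_allpairs_dep /= -sumE; apply: eq_bigr => j _.
  under eq_bigr => a _ do rewrite adjmxM adjmx_delta !mulmxA
      -[adjmx (B j) *m _ *m _]mulmxA mul_delta_mx.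
  by rewrite -mulmx_suml -mulmx_sumr sum_delta mulmx1 EB.
- move=> M /allpairsPdep [j [a [_ _ ->]]] rho _.
  rewrite adjmxM adjmx_delta.
  have -> : delta_mx (mxvec_index j a) a *m B j *m rho *m (adjmx (B j) *m delta_mx a (mxvec_index j a))
     = delta_mx (mxvec_index j a) a *m (B j *m rho *m adjmx (B j)) *m delta_mx a (mxvec_index j a).
    by rewrite !mulmxA.
  apply/is_diag_mxP => s t ne; rewrite delta_sand.
  case: (s =P _) => [es|]; last by rewrite mul0r.
  case: (t =P _) => [et|]; last by rewrite mul0r.
  by move: ne; rewrite es et eqxx.
- move=> rho j; rewrite /kraus_apply mulmx_suml tr_sum big_allpairs_dep /=.
  have term : forall j' a,
    \tr (delta_mx (mxvec_index j' a) a *m B j' *m rho *m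
          adjmx (delta_mx (mxvec_index j' a) a *m B j') *m projB R d j)
    = \tr (B j' *m rho *m adjmx (B j') *m delta_mx a a) *+ (j' == j).
    move=> j' a; rewrite adjmxM.
    have -> : delta_mx (mxvec_index j' a) a *m B j' *m rho *m
          (adjmx (B j') *m adjmx (delta_mx (mxvec_index j' a) a))
      = delta_mx (mxvec_index j' a) a *m (B j' *m rho *m adjmx (B j')) *m
          adjmx (delta_mx (mxvec_index j' a) a) by rewrite !mulmxA.
    rewrite tr_sand adjmx_delta projB_sand.
    case: (j' == j); last by rewrite !mulr0n mul0mx mxtrace0.
    by rewrite !mulr1n mxtrace_mulC.
  under eq_bigr => j' _ do under eq_bigr => a _ do rewrite term.
  under eq_bigr => j' _ do rewrite sumrMnl.
  rewrite (bigD1 j) //= eqxx mulr1n [X in _ + X]big1 ?addr0; last first.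
    by move=> j' /negbTE ->; rewrite mulr0n.
  rewrite -tr_sum -mulmx_sumr sum_delta mulmx1 EB.
  by rewrite mxtrace_mulC mulmxA.
Qed.

End Aux.

Theorem proposition1 (R : realType) (d k : nat) (p : 'I_k -> R)
  (rho : 'I_k -> 'M[R[i]]_d) :
  (forall j, 0 <= p j) -> \sum_(j < k) p j = 1 ->
  (forall j, density (rho j)) ->
  Psuc p rho = Psuc_free (@IO R (k * d) d) p rho /\
  Psuc_free (@IO R (k * d) d) p rho = Psuc_free (@MIO R (k * d) d) p rho.
Proof.
move=> _ _ _; rewrite /Psuc /Psuc_free; split; congr sup;
  apply/seteqP; split => x /=.
- move=> [E [hE ->]]; have [N [hN hv]] := povm_IO hE.
  by exists N; split => //; apply: eq_bigr => j _; rewrite hv.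
- move=> [N [hN ->]]; have [E [hE hv]] := MIO_povm (IO_MIO hN).
  by exists E; split => //; apply: eq_bigr => j _; rewrite hv.
- move=> [N [hN ->]].
  by exists N; split => //; apply: IO_MIO.
- move=> [N [hN ->]]; have [E [hE hv]] := MIO_povm hN.
  have [N' [hN' hv']] := povm_IO hE.
  by exists N'; split => //; apply: eq_bigr => j _; rewrite hv hv'.
Qed.
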